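(* Let $\mathbf{k}$ be a field of characteristic $\neq 2$. Let $(\wedge V,d)$ be a minimal algebra generated in degree $1$ (i.e. $V=V^1$), and let $(A,d)$, $(B,d)$ be CDGAs over $\mathbf{k}$ with $A^0=\mathbf{k}$. If $f:(\wedge V,d)\to(A,d)$ is a CDGA morphism and $\psi:(B,d)\to(A,d)$ is a quasi-isomorphism (not necessarily surjective), then there is a CDGA morphism $g:(\wedge V,d)\to(B,d)$ with $\psi\circ g=f$. Moreover, if $f$ is a quasi-isomorphism then so is $g$.
   Context: A CDGA over $\mathbf{k}$ is a graded-commutative algebra $A=\bigoplus_{i\ge0}A^i$ with a degree $+1$ derivation $d$, $d^2=0$. A quasi-isomorphism is a CDGA morphism inducing an isomorphism in cohomology. A minimal algebra is a CDGA $(\wedge V,d)$ where $\wedge V$ is the free graded-commutative algebra on a graded vector space $V=\bigoplus_{i\geq1}V^i$, and there is a basis $\{x_\tau\}_{\tau\in I}$ of $V$ indexed by a well-ordered set $I$ such that $\deg x_\mu\le\deg x_\tau$ whenever $\mu<\tau$ and each $dx_\tau$ lies in the subalgebra generated by the $x_\mu$ with $\mu<\tau$. *)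

(* Defs.v *)
From HB Require Import structures.
From mathcomp Require Import all_boot all_order all_algebra.
Set Implicit Arguments. Unset Strict Implicit. Unset Printing Implicit Defensive.
Import Order.TTheory GRing.Theory Num.Theory.
Local Open Scope ring_scope.

(* A graded k-algebra is represented by a k-algebra A together with a family
   of predicates [deg n] singling out the homogeneous elements of degree n,
   i.e. deg n x <-> x \in A^n.                  *)

Section Graded.
Variable k : fieldType.

Definition gca (A : algType k) (deg : nat -> A -> Prop) : Prop :=
  [/\
      (forall n, deg n 0) ,
      (forall n (a : k) x y, deg n x -> deg n y -> deg n (a *: x + y)) ,
      (forall x : A, exists N (f : nat -> A),
          (forall i, deg i (f i)) /\ x = \sum_(i < N) f i) ,
      (forall N (f : nat -> A), (forall i, deg i (f i)) ->
          \sum_(i < N) f i = 0 -> forall i, (i < N)%N -> f i = 0) &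
      [/\ deg 0 1 ,
          (forall i j (a b : A), deg i a -> deg j b -> deg (i + j)%N (a * b)) &
          (forall i j (a b : A), deg i a -> deg j b ->
              a * b = (-1) ^+ (i * j) *: (b * a))]].

Definition cdga (A : algType k) (deg : nat -> A -> Prop) (d : A -> A) : Prop :=
  [/\ gca deg ,
      (forall (a : k) x y, d (a *: x + y) = a *: d x + d y) ,
      (forall n x, deg n x -> deg n.+1 (d x)) ,
      (forall x, d (d x) = 0) &
      (forall i (a b : A), deg i a -> d (a * b) = d a * b + (-1) ^+ i *: (a * d b))].

Definition gmor (A B : algType k) (degA : nat -> A -> Prop) (degB : nat -> B -> Prop)
  (f : A -> B) : Prop :=
  [/\ (forall (a : k) x y, f (a *: x + y) = a *: f x + f y) ,
      f 1 = 1 ,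
      (forall x y, f (x * y) = f x * f y) &
      (forall n x, degA n x -> degB n (f x))].

Definition cdga_mor (A B : algType k) (degA : nat -> A -> Prop) (dA : A -> A)
  (degB : nat -> B -> Prop) (dB : B -> B) (f : A -> B) : Prop :=
  gmor degA degB f /\ (forall x, f (dA x) = dB (f x)).

Definition coboundary (A : algType k) (deg : nat -> A -> Prop) (d : A -> A)
  (n : nat) (x : A) : Prop :=
  match n with
  | 0 => x = 0
  | m.+1 => exists a, deg m a /\ d a = x
  end.

Definition quasi_iso (A B : algType k) (degA : nat -> A -> Prop) (dA : A -> A)
  (degB : nat -> B -> Prop) (dB : B -> B) (f : A -> B) : Prop :=
  cdga_mor degA dA degB dB f /\
  forall n,
    (* injectivity of H^n(f) *)
    (forall z, degA n z -> dA z = 0 -> coboundary degB dB n (f z) ->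
        coboundary degA dA n z) /\
    (* surjectivity of H^n(f) *)
    (forall w, degB n w -> dB w = 0 ->
        exists z, [/\ degA n z, dA z = 0 & coboundary degB dB n (w - f z)]).

Definition well_order (I : Type) (lt : I -> I -> Prop) : Prop :=
  [/\ well_founded lt ,
      (forall a b c, lt a b -> lt b c -> lt a c) &
      (forall a b, lt a b \/ a = b \/ lt b a)].

Definition in_subalg_gen (A : algType k) (I : Type) (x : I -> A) (P : I -> Prop)
  (y : A) : Prop :=
  forall S : A -> Prop,
    S 1 -> (forall mu, P mu -> S (x mu)) ->
    (forall (a : k) u v, S u -> S v -> S (a *: u + v)) ->
    (forall u v, S u -> S v -> S (u * v)) -> S y.

(* (L, deg) is the free graded-commutative algebra on the degree-1 family x,
   i.e. L = \wedge V with V = V^1 having basis (x_i)_{i in I}: universal property *)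
Definition free_gca_deg1 (L : algType k) (deg : nat -> L -> Prop) (I : Type)
  (x : I -> L) : Prop :=
  gca deg /\ (forall i, deg 1%N (x i)) /\
  forall (C : algType k) (degC : nat -> C -> Prop), gca degC ->
  forall c : I -> C, (forall i, degC 1%N (c i)) ->
    exists phi : L -> C,
      [/\ gmor deg degC phi, (forall i, phi (x i) = c i) &
          (forall psi : L -> C, gmor deg degC psi -> (forall i, psi (x i) = c i) ->
             forall y, psi y = phi y)].

Definition minimal_deg1 (L : algType k) (deg : nat -> L -> Prop) (d : L -> L)
  (I : Type) (lt : I -> I -> Prop) (x : I -> L) : Prop :=
  [/\ cdga deg d , free_gca_deg1 deg x , well_order lt &
      (forall tau, in_subalg_gen x (fun mu => lt mu tau) (d (x tau)))].

End Graded.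

(* Main.v *)
Require Import Defs.
From HB Require Import structures.
From mathcomp Require Import all_boot all_order all_algebra.
From Stdlib Require Import ClassicalEpsilon FunctionalExtensionality ProofIrrelevance.
Set Implicit Arguments. Unset Strict Implicit. Unset Printing Implicit Defensive.
Import GRing.Theory.
Local Open Scope ring_scope.

Definition islin (k : fieldType) (A B : algType k) (h : A -> B) :=
  forall (a : k) x y, h (a *: x + y) = a *: h x + h y.

Lemma lin0 (k : fieldType) (A B : algType k) (h : A -> B) : islin h -> h 0 = 0.
Proof.
move=> H; have := H 1 0 0; rewrite !scale1r addr0 => /(congr1 (fun z => z - h 0)).
by rewrite subrr addrK => /esym.
Qed.

Lemma linD (k : fieldType) (A B : algType k) (h : A -> B) : islin h -> forall x y, h (x + y) = h x + h y.
Proof. by move=> H x y; have := H 1 x y; rewrite !scale1r. Qed.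

Lemma linZ (k : fieldType) (A B : algType k) (h : A -> B) : islin h -> forall a x, h (a *: x) = a *: h x.
Proof. by move=> H a x; have := H a x 0; rewrite !addr0 lin0 // addr0. Qed.

Lemma linN (k : fieldType) (A B : algType k) (h : A -> B) : islin h -> forall x, h (- x) = - h x.
Proof. by move=> H x; rewrite -scaleN1r linZ // scaleN1r. Qed.

Lemma linB (k : fieldType) (A B : algType k) (h : A -> B) : islin h -> forall x y, h (x - y) = h x - h y.
Proof. by move=> H x y; rewrite linD // linN. Qed.

Lemma lin_sum (k : fieldType) (A B : algType k) (h : A -> B) : islin h ->
  forall N (F : nat -> A), h (\sum_(i < N) F i) = \sum_(i < N) h (F i).
Proof.
move=> H; elim=> [|N IH] F; first by rewrite !big_ord0 lin0.
by rewrite !big_ord_recr /= linD // IH.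
Qed.

Lemma islin_comp (k : fieldType) (A B C : algType k) (h : A -> B) (h' : B -> C) :
  islin h -> islin h' -> islin (fun z => h' (h z)).
Proof. by move=> H H' a x y; rewrite H H'. Qed.

Lemma deg_0 (k : fieldType) (A : algType k) (deg : nat -> A -> Prop) : gca deg -> forall n, deg n 0.
Proof. by case. Qed.

Lemma deg_lin (k : fieldType) (A : algType k) (deg : nat -> A -> Prop) : gca deg ->
  forall n (a : k) x y, deg n x -> deg n y -> deg n (a *: x + y).
Proof. by case. Qed.

Lemma deg_D (k : fieldType) (A : algType k) (deg : nat -> A -> Prop) : gca deg ->
  forall n x y, deg n x -> deg n y -> deg n (x + y).
Proof. by move=> H n x y hx hy; have := deg_lin H 1 hx hy; rewrite scale1r. Qed.

Lemma deg_Z (k : fieldType) (A : algType k) (deg : nat -> A -> Prop) : gca deg ->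
  forall n (a : k) x, deg n x -> deg n (a *: x).
Proof. by move=> H n a x hx; have := deg_lin H a hx (deg_0 H n); rewrite addr0. Qed.

Lemma deg_B (k : fieldType) (A : algType k) (deg : nat -> A -> Prop) : gca deg ->
  forall n x y, deg n x -> deg n y -> deg n (x - y).
Proof.
move=> H n x y hx hy; rewrite addrC -scaleN1r; exact: deg_lin.
Qed.

Lemma deg_sum (k : fieldType) (A : algType k) (deg : nat -> A -> Prop) : gca deg ->
  forall n N (F : nat -> A), (forall i, deg n (F i)) -> deg n (\sum_(i < N) F i).
Proof.
move=> H n; elim=> [|N IH] F hF; first by rewrite big_ord0; apply: deg_0.
by rewrite big_ord_recr /=; apply: deg_D => //; apply: IH.
Qed.

Lemma deg_1 (k : fieldType) (A : algType k) (deg : nat -> A -> Prop) : gca deg -> deg 0 1.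
Proof. by move=> [_ _ _ _ [? ? ?]]. Qed.

Lemma deg_M (k : fieldType) (A : algType k) (deg : nat -> A -> Prop) : gca deg ->
  forall i j a b, deg i a -> deg j b -> deg (i + j)%N (a * b).
Proof. by move=> [_ _ _ _ [? ? ?]]. Qed.

Lemma d_1 (k : fieldType) (A : algType k) (deg : nat -> A -> Prop) d : cdga deg d -> d 1 = 0.
Proof.
case=> hg _ _ _ hL; have := hL 0%N 1 1 (deg_1 hg).
rewrite !mulr1 !mul1r expr0 scale1r => /(congr1 (fun z => z - d 1)).
by rewrite subrr addrK => /esym.
Qed.

Lemma d_lin (k : fieldType) (A : algType k) (deg : nat -> A -> Prop) d : cdga deg d -> islin d.
Proof. by case. Qed.

Lemma gmor_lin (k : fieldType) (A B : algType k) dA dB (h : A -> B) : gmor dA dB h -> islin h.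
Proof. by case. Qed.

Lemma gmor_comp (k : fieldType) (A B C : algType k) dA dB dC (h : A -> B) (h' : B -> C) :
  gmor dA dB h -> gmor dB dC h' -> gmor dA dC (fun z => h' (h z)).
Proof.
case=> l1 o1 m1 g1 [l2 o2 m2 g2]; split.
- exact: islin_comp.
- by rewrite o1 o2.
- by move=> u v; rewrite m1 m2.
- by move=> n u /g1 /g2.
Qed.

Lemma deg_dec (k : fieldType) (A : algType k) (deg : nat -> A -> Prop) : gca deg ->
  forall x : A, exists N (f : nat -> A), (forall i, deg i (f i)) /\ x = \sum_(i < N) f i.
Proof. by case. Qed.

Lemma deg_dir (k : fieldType) (A : algType k) (deg : nat -> A -> Prop) : gca deg ->
  forall N (f : nat -> A), (forall i, deg i (f i)) ->
          \sum_(i < N) f i = 0 -> forall i, (i < N)%N -> f i = 0.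
Proof. by case. Qed.

Lemma agree (k : fieldType) (L C : algType k) (I : Type) (x : I -> L) (P : I -> Prop)
  (h1 h2 : L -> C) : islin h1 -> islin h2 -> h1 1 = 1 -> h2 1 = 1 ->
  (forall u v, h1 (u * v) = h1 u * h1 v) -> (forall u v, h2 (u * v) = h2 u * h2 v) ->
  (forall mu, P mu -> h1 (x mu) = h2 (x mu)) ->
  forall y, in_subalg_gen x P y -> h1 y = h2 y.
Proof.
move=> l1 l2 o1 o2 m1 m2 hx y hy; apply: (hy (fun z => h1 z = h2 z)).
- by rewrite o1 o2.
- exact: hx.
- by move=> a u v eu ev; rewrite l1 l2 eu ev.
- by move=> u v eu ev; rewrite m1 m2 eu ev.
Qed.

Lemma gagree (k : fieldType) (L C : algType k) degL degC (I : Type) (x : I -> L) (P : I -> Prop)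
  (h1 h2 : L -> C) : gmor degL degC h1 -> gmor degL degC h2 ->
  (forall mu, P mu -> h1 (x mu) = h2 (x mu)) ->
  forall y, in_subalg_gen x P y -> h1 y = h2 y.
Proof. case=> ? ? ? _ [? ? ? _]; exact: agree. Qed.

Lemma E_vanish (k : fieldType) (L B : algType k) degL dL degB dB (I : Type) (x : I -> L)
  (P : I -> Prop) (phi : L -> B) :
  cdga degL dL -> cdga degB dB -> gmor degL degB phi ->
  (forall mu, P mu -> phi (dL (x mu)) = dB (phi (x mu))) ->
  forall y, in_subalg_gen x P y -> phi (dL y) = dB (phi y).
Proof.
move=> hL hB hphi hx.
have [gL _ dLdeg _ dLder] := hL.
have [gB _ dBdeg _ dBder] := hB.
have lL := d_lin hL; have lB := d_lin hB.
have [lphi o1 mphi gphi] := hphi.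
pose E := fun y => phi (dL y) - dB (phi y).
have El : islin E.
  move=> a u v; by rewrite /E lL lphi lphi lB scalerBr opprD addrACA.
have Edeg : forall i u, degL i u -> degB i.+1 (E u).
  move=> i u hu; apply: deg_B => //; first by apply/gphi/dLdeg.
  by apply/dBdeg/gphi.
have Eder : forall i a b, degL i a -> E (a * b) = E a * phi b + (-1) ^+ i *: (phi a * E b).
  move=> i a b ha; rewrite /E (dLder i a b ha) mphi (linD lphi) mphi (linZ lphi) mphi.
  by rewrite (dBder i _ _ (gphi _ _ ha)) mulrBl mulrBr scalerBr opprD addrACA.
have Ecomp : forall u, E u = 0 -> forall N fu, (forall i, degL i (fu i)) ->
     u = \sum_(i < N) fu i -> forall i, (i < N)%N -> E (fu i) = 0.
  move=> u eu N fu hfu hu i hi.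
  pose h := fun j => if j is j'.+1 then E (fu j') else 0.
  have := @deg_dir k B degB gB N.+1 h _ _ i.+1 hi; apply.
    by case=> [|j] /=; [apply: deg_0|apply: Edeg].
  by rewrite big_ord_recl /= add0r -lin_sum // -hu.
move=> y hy.
suff : E y = 0 by move/eqP; rewrite subr_eq0 => /eqP.
apply: (hy (fun z => E z = 0)).
- by rewrite /E (d_1 hL) o1 (lin0 lphi) (d_1 hB) subrr.
- by move=> mu hmu; rewrite /E hx // subrr.
- by move=> a u v eu ev; rewrite El eu ev scaler0 addr0.
- move=> u v eu ev.
  have [N [fu [hfu hu]]] := deg_dec gL u.
  have ec := Ecomp u eu N fu hfu hu.
  rewrite hu mulr_suml (lin_sum El N (fun n => fu n * v)).
  apply: big1 => i _; rewrite (Eder i) // ec // ev mulr0 scaler0 mul0r addr0 //.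
Qed.
Definition Gp (k : fieldType) (L : algType k) (I : Type) (x : I -> L) (y : L) :=
  in_subalg_gen x (fun _ => True) y.

Definition Gb (k : fieldType) (L : algType k) (I : Type) (x : I -> L) : pred L :=
  fun y => if excluded_middle_informative (Gp x y) then true else false.

Lemma GbP (k : fieldType) (L : algType k) (I : Type) (x : I -> L) y : Gb x y <-> Gp x y.
Proof. rewrite /Gb; case: excluded_middle_informative => //; split => //. Qed.

Lemma Gb_closed (k : fieldType) (L : algType k) (I : Type) (x : I -> L) :
  GRing.subsemialg_closed (Gb x).
Proof.
have H1 : forall u v (a : k), Gp x u -> Gp x v -> Gp x (a *: u + v).
  rewrite /Gp /in_subalg_gen.
  move=> u v a hu hv S h1 hx hl hm. exact: (hl a u v (hu S h1 hx hl hm) (hv S h1 hx hl hm)).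
have HM : forall u v, Gp x u -> Gp x v -> Gp x (u * v).
  rewrite /Gp /in_subalg_gen.
  move=> u v hu hv S h1 hx hl hm. exact: (hm u v (hu S h1 hx hl hm) (hv S h1 hx hl hm)).
have H0 : Gp x 0.
  rewrite /Gp /in_subalg_gen.
  move=> S h1 hx hl hm. have := hl (-1) 1 1 h1 h1. by rewrite scaleN1r addNr.
split.
- by apply/GbP; rewrite /Gp /in_subalg_gen => S h1.
- split; first by apply/GbP.
  move=> u v /GbP hu /GbP hv; apply/GbP.
  by have := H1 u v 1 hu hv; rewrite scale1r.
- move=> a u /GbP hu; apply/GbP. by have := H1 u 0 a hu H0; rewrite addr0.
- by move=> u v /GbP hu /GbP hv; apply/GbP; apply: HM.
Qed.

Record subG (k : fieldType) (L : algType k) (I : Type) (x : I -> L) :=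
  SubG { sgval : L; sgvalP : Gb x sgval }.

HB.instance Definition _ (k : fieldType) (L : algType k) (I : Type) (x : I -> L) :=
  [isSub for @sgval k L I x].
HB.instance Definition _ (k : fieldType) (L : algType k) (I : Type) (x : I -> L) :=
  [Choice of subG x by <:].
HB.instance Definition _ (k : fieldType) (L : algType k) (I : Type) (x : I -> L) :=
  GRing.SubChoice_isSubAlgebra.Build k L (Gb x) (subG x) (Gb_closed x).


Unset Implicit Arguments.
Lemma Gp_lin {k : fieldType} {L : algType k} {I : Type} {x : I -> L} {u v : L} (a : k) :
  Gp x u -> Gp x v -> Gp x (a *: u + v).
Proof. by move=> hu hv S h1 hx hl hm; exact: (hl a u v (hu S h1 hx hl hm) (hv S h1 hx hl hm)). Qed.

Lemma Gp_mul {k : fieldType} {L : algType k} {I : Type} {x : I -> L} {u v : L} :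
  Gp x u -> Gp x v -> Gp x (u * v).
Proof. by move=> hu hv S h1 hx hl hm; exact: (hm u v (hu S h1 hx hl hm) (hv S h1 hx hl hm)). Qed.

Lemma Gp_1 {k : fieldType} {L : algType k} {I : Type} (x : I -> L) : Gp x 1.
Proof. by move=> S h1 hx hl hm. Qed.

Lemma Gp_x {k : fieldType} {L : algType k} {I : Type} (x : I -> L) i : Gp x (x i).
Proof. by move=> S h1 hx hl hm; exact: (hx i Logic.I). Qed.

Lemma Gp_0 {k : fieldType} {L : algType k} {I : Type} (x : I -> L) : Gp x 0.
Proof. by have := Gp_lin (-1) (Gp_1 x) (Gp_1 x); rewrite scaleN1r addNr. Qed.

Lemma Gp_add {k : fieldType} {L : algType k} {I : Type} {x : I -> L} {u v : L} :
  Gp x u -> Gp x v -> Gp x (u + v).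
Proof. by move=> hu hv; have := Gp_lin 1 hu hv; rewrite scale1r. Qed.

Lemma Gp_scale {k : fieldType} {L : algType k} {I : Type} {x : I -> L} {u : L} (a : k) :
  Gp x u -> Gp x (a *: u).
Proof. by move=> hu; have := Gp_lin a hu (Gp_0 x); rewrite addr0. Qed.

Set Implicit Arguments.
Lemma seq_dec (k : fieldType) (L : algType k) (degL : nat -> L -> Prop) (I : Type)
  (x : I -> L) : gca degL -> (forall i, degL 1%N (x i)) ->
  forall y, Gp x y -> exists s : seq (nat * L),
    (forall p, p \in s -> degL p.1 p.2 /\ Gp x p.2) /\ y = \sum_(p <- s) p.2.
Proof.
move=> gL hx1 y hy.
apply: (hy (fun z => exists s : seq (nat * L),
    (forall p, p \in s -> degL p.1 p.2 /\ Gp x p.2) /\ z = \sum_(p <- s) p.2)).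
- exists [:: (0%N, 1)]; split; last by rewrite big_seq1.
  move=> p; rewrite inE => /eqP -> /=; split; [exact: deg_1|exact: Gp_1].
- move=> mu _; exists [:: (1%N, x mu)]; split; last by rewrite big_seq1.
  move=> p; rewrite inE => /eqP -> /=; split; [exact: hx1|exact: Gp_x].
- move=> a u v [s1 [h1 ->]] [s2 [h2 ->]].
  exists ([seq (p.1, a *: p.2) | p <- s1] ++ s2); split.
    move=> p; rewrite mem_cat => /orP [/mapP [q hq ->]|hp] /=; last exact: h2.
    have [hq1 hq2] := h1 q hq; split; [exact: deg_Z|exact: Gp_scale].
  by rewrite big_cat big_map scaler_sumr.
- move=> u v [s1 [h1 ->]] [s2 [h2 ->]].
  exists [seq ((p.1 + q.1)%N, p.2 * q.2) | p : nat * L <- s1, q : nat * L <- s2]; split.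
    move=> r /allpairsP [[p q] [hp hq ->]] /=.
    have [hp1 hp2] := h1 p hp; have [hq1 hq2] := h2 q hq.
    split; [exact: deg_M|exact: Gp_mul].
  rewrite big_allpairs_dep /= mulr_suml.
  by apply: eq_bigr => p _; rewrite mulr_sumr.
Qed.

Lemma seq_to_nat (k : fieldType) (L : algType k) (degL : nat -> L -> Prop) (I : Type)
  (x : I -> L) : gca degL ->
  forall s : seq (nat * L), (forall p, p \in s -> degL p.1 p.2 /\ Gp x p.2) ->
  exists N (f : nat -> L), (forall i, degL i (f i) /\ Gp x (f i)) /\
     \sum_(p <- s) p.2 = \sum_(i < N) f i.
Proof.
move=> gL; elim=> [|[n e] s IH] hs.
  exists 0%N, (fun _ => 0); split; last by rewrite big_nil big_ord0.
  by move=> i; split; [exact: deg_0|exact: Gp_0].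
have [N [f [hf hsum]]] := IH (fun p hp => hs p (mem_behead (hp : p \in behead ((n, e) :: s)))).
have [he1 he2] := hs (n, e) (mem_head _ _).
exists (maxn N n.+1), (fun i => (if (i < N)%N then f i else 0) + (if i == n then e else 0)).
split.
  move=> i; have [hf1 hf2] := hf i; split.
    by apply: deg_D => //; [case: ifP => _ //; exact: deg_0
                           |case: ifP => [/eqP -> //|_]; exact: deg_0].
  by apply: Gp_add; [case: ifP => _ //; exact: Gp_0|case: ifP => _ //; exact: Gp_0].
rewrite big_cons /= big_split /= hsum addrC; congr (_ + _).
  have hn : (n < maxn N n.+1)%N by rewrite leq_max ltnSn orbT.
  rewrite (eq_bigr (fun i : 'I_(maxn N n.+1) => if i == Ordinal hn then e else 0)); last first.
    by move=> i _.
  by rewrite -big_mkcond big_pred1_eq.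
rewrite (big_ord_widen _ f (leq_maxl N n.+1)).
by rewrite big_mkcond.
Qed.

Lemma Gp_val (k : fieldType) (L : algType k) (I : Type) (x : I -> L) (c : subG x) :
  Gp x (val c).
Proof. by apply/GbP; exact: sgvalP. Qed.

Lemma subG_gca (k : fieldType) (L : algType k) (degL : nat -> L -> Prop) (I : Type)
  (x : I -> L) : gca degL -> (forall i, degL 1%N (x i)) ->
  gca (fun n (c : subG x) => degL n (val c)).
Proof.
move=> gL hx1; split.
- by move=> n; rewrite raddf0; apply: deg_0.
- by move=> n a u v hu hv /=; apply: deg_lin.
- move=> c.
  have [s [hs e]] := seq_dec gL hx1 (Gp_val c).
  have [N [f [hf e2]]] := seq_to_nat gL hs.
  have vf : forall i, val (insubd (0 : subG x) (f i)) = f i.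
    by move=> i; rewrite val_insubd; have [_ /GbP ->] := hf i.
  exists N, (fun i => insubd (0 : subG x) (f i)); split.
    by move=> i /=; rewrite vf; have [] := hf i.
  by apply: val_inj; rewrite raddf_sum /= e e2; apply: eq_bigr => i _; rewrite vf.
- move=> N f hf hs i hi; apply: val_inj; rewrite raddf0.
  have hs' : \sum_(j < N) val (f j) = 0 by have := congr1 val hs; rewrite raddf_sum raddf0.
  exact: (deg_dir gL hf hs' hi).
- split.
  + by rewrite rmorph1; apply: deg_1.
  + by move=> i j a b ha hb /=; apply: deg_M.
  + move=> i j a b ha hb; apply: val_inj => /=.
    by case: gL => _ _ _ _ [_ _ hc]; rewrite (hc i j).   
Qed.

Lemma generation (k : fieldType) (L : algType k) (degL : nat -> L -> Prop) (I : Type)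
  (x : I -> L) : free_gca_deg1 degL x -> forall y, in_subalg_gen x (fun _ => True) y.
Proof.
move=> [gL [hx1 univ]] y.
have gC := subG_gca gL hx1.
pose c := fun i => @SubG k L I x (x i) ((GbP x (x i)).2 (Gp_x x i)) : subG x.
have [phi [gphi phix _]] := univ _ _ gC c (fun i => hx1 i).
have [phiL [_ _ uniq]] := univ L degL gL x hx1.
have gval : gmor (fun n (c : subG x) => degL n (val c)) degL (fun c : subG x => val c).
  split.
  - by [].
  - by [].
  - by [].
  - by [].
have e1 := uniq _ (gmor_comp gphi gval) (fun i => congr1 val (phix i)).
have gid : gmor degL degL (fun z : L => z) by split.
have e2 := uniq _ gid (fun i => erefl).
have : Gp x (val (phi y)) by exact: Gp_val.
by rewrite e1 -e2.
Qed.

Lemma cob_map (k : fieldType) (B A : algType k) degB dB degA dA (psi : B -> A) :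
  cdga_mor degB dB degA dA psi ->
  forall n b, coboundary degB dB n b -> coboundary degA dA n (psi b).
Proof.
move=> [[lp _ _ gp] cp] [|m] b /=.
  by move=> ->; rewrite (lin0 lp).
by move=> [a [ha <-]]; exists (psi a); split; [exact: gp|rewrite cp].
Qed.

Lemma qi_2of3 (k : fieldType) (L B A : algType k) degL dL degB dB degA dA
  (g : L -> B) (psi : B -> A) (f : L -> A) :
  cdga degB dB -> cdga degA dA ->
  cdga_mor degL dL degB dB g -> quasi_iso degB dB degA dA psi ->
  (forall y, psi (g y) = f y) -> quasi_iso degL dL degA dA f ->
  quasi_iso degL dL degB dB g.
Proof.
move=> hB hA hg [hpsi qpsi] e [hf qf]; split => // n.
have [[lg _ _ gg] cg] := hg.
have [[lp _ _ gp] cp] := hpsi.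
have gB : gca degB by case: hB.
have lB := d_lin hB.
split.
- move=> z hz dz cz; apply: (qf n).1 => //.
  by rewrite -e; apply: (cob_map hpsi).
- move=> w hw dw.
  have hpw : degA n (psi w) by exact: gp.
  have dpw : dA (psi w) = 0 by rewrite -cp dw (lin0 lp).
  have [z [hz dz cz]] := (qf n).2 _ hpw dpw.
  exists z; split => //.
  apply: (qpsi n).1.
  + by apply: deg_B => //; exact: gg.
  + by rewrite (linB lB) dw -cg dz (lin0 lg) subrr.
  + by rewrite (linB lp) e.
Qed.

Definition Phi (k : fieldType) (L B : algType k) (degL : nat -> L -> Prop)
  (degB : nat -> B -> Prop) (I : Type) (x : I -> L) (c : I -> B) : L -> B :=
  epsilon (inhabits (fun _ => 0))
    (fun phi => gmor degL degB phi /\ forall i, phi (x i) = c i).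

Lemma PhiP (k : fieldType) (L B : algType k) (degL : nat -> L -> Prop)
  (degB : nat -> B -> Prop) (I : Type) (x : I -> L) (c : I -> B) :
  free_gca_deg1 degL x -> gca degB -> (forall i, degB 1%N (c i)) ->
  gmor degL degB (Phi degL degB x c) /\ forall i, Phi degL degB x c (x i) = c i.
Proof.
move=> [_ [_ univ]] gB hc; apply: (epsilon_spec (inhabits (fun _ => 0))
   (fun phi => gmor degL degB phi /\ forall i, phi (x i) = c i)).
by have [phi [? ? _]] := univ _ _ gB c hc; exists phi.
Qed.

Definition restr (B : Type) (b0 : B) (I : Type) (lt : I -> I -> Prop) (c : I -> B) (t : I) : I -> B :=
  fun mu => match excluded_middle_informative (lt mu t) with
            | left _ => c mu | right _ => b0 end.

Theorem theoremA2 (k : fieldType) (hk : 2%N \notin [pchar k])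
  (L : algType k) (degL : nat -> L -> Prop) (dL : L -> L)
  (I : Type) (lt : I -> I -> Prop) (x : I -> L)
  (hL : minimal_deg1 degL dL lt x)
  (A : algType k) (degA : nat -> A -> Prop) (dA : A -> A) (hA : cdga degA dA)
  (hA0 : forall a : A, degA 0%N a -> exists c : k, a = c *: 1)
  (B : algType k) (degB : nat -> B -> Prop) (dB : B -> B) (hB : cdga degB dB)
  (f : L -> A) (hf : cdga_mor degL dL degA dA f)
  (psi : B -> A) (hpsi : quasi_iso degB dB degA dA psi) :
  exists g : L -> B,
    [/\ cdga_mor degL dL degB dB g ,
        (forall y, psi (g y) = f y) &
        (quasi_iso degL dL degA dA f -> quasi_iso degL dL degB dB g)].
Proof.
have [cL fL [wf ltT _] hdx] := hL.
have [gL [hx1 _]] := fL.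
have gB : gca degB by case: hB.
have lB := d_lin hB; have lA := d_lin hA; have lL := d_lin cL.
have [[gpsi cpsi] qpsi] := hpsi.
have lpsi := gmor_lin gpsi.
have [gf cf] := hf.
have [lf _ _ degf] := gf.
pose P := fun t (cc : I -> B) (b : B) =>
  [/\ degB 1%N b, dB b = Phi degL degB x cc (dL (x t)) & psi b = f (x t)].
pose F := fun t (rec : forall mu, lt mu t -> B) =>
  epsilon (inhabits (0 : B)) (P t (fun mu => match excluded_middle_informative (lt mu t) with
                               | left h => rec mu h | right _ => 0 end)).
pose c := Fix wf (fun _ => B) F.
have cE : forall t, c t = epsilon (inhabits 0) (P t (restr 0 lt c t)).
  move=> t; rewrite /c Fix_eq //.
  move=> t' r1 r2 hr; rewrite /F; congr (epsilon _ (P t' _)).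
  apply: functional_extensionality => mu.
  by case: excluded_middle_informative.
have hrest : forall t, (forall mu, lt mu t -> degB 1%N (c mu)) ->
    forall i, degB 1%N (restr 0 lt c t i).
  move=> t h i; rewrite /restr; case: excluded_middle_informative => hi.
    exact: h.
  exact: deg_0.
have inv : forall t, P t (restr 0 lt c t) (c t).
  apply: (well_founded_ind wf) => t IH.
  rewrite cE; apply: epsilon_spec.
  have hcc : forall i, degB 1%N (restr 0 lt c t i).
    by apply: hrest => mu h; have [] := IH mu h.
  have [gphi phix] := PhiP fL gB hcc.
  set phi := Phi degL degB x (restr 0 lt c t).
  move: gphi phix; rewrite -/phi => gphi phix.
  have phic : forall mu, lt mu t -> phi (x mu) = c mu.
    by move=> mu h; rewrite phix /restr; case: excluded_middle_informative.
  have Fa : forall mu, lt mu t -> phi (dL (x mu)) = dB (phi (x mu)).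
    move=> mu h; rewrite phic //; have [_ -> _] := IH mu h.
    have hcm : forall i, degB 1%N (restr 0 lt c mu i).
      by apply: hrest => nu hnu; have [] := IH nu (ltT _ _ _ hnu h).
    have [gm pm] := PhiP fL gB hcm.
    apply: (gagree gphi gm _ (hdx mu)) => nu hnu.
    rewrite phic; last exact: (ltT _ _ _ hnu h).
    by rewrite pm /restr; case: excluded_middle_informative.
  have Fb : forall mu, lt mu t -> psi (phi (x mu)) = f (x mu).
    by move=> mu h; rewrite phic //; have [_ _ ->] := IH mu h.
  have hw := hdx t.
  have dw : dB (phi (dL (x t))) = 0.
    rewrite -(E_vanish cL hB gphi Fa hw).
    by case: cL => _ _ _ -> _; rewrite (lin0 (gmor_lin gphi)).
  have pw : psi (phi (dL (x t))) = dA (f (x t)).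
    by rewrite (gagree (gmor_comp gphi gpsi) gf Fb hw) cf.
  have dw2 : degB 2%N (phi (dL (x t))).
    have [_ _ _ gp] := gphi; apply: gp.
    by case: cL => _ _ hd _ _; apply: hd.
  have hft : degA 1%N (f (x t)) by apply: degf.
  have [b0 [hb0 db0]] : coboundary degB dB 2 (phi (dL (x t))).
    apply: ((qpsi 2%N).1 _ dw2 dw).
    by exists (f (x t)); split.
  have hz : degA 1%N (f (x t) - psi b0).
    apply: deg_B => //; first by case: hA.
    by have [_ _ _ gp] := gpsi; apply: gp.
  have dz : dA (f (x t) - psi b0) = 0.
    by rewrite (linB lA) -cpsi db0 pw subrr.
  have [c0 [hc0 dc0 [a [ha da]]]] := (qpsi 1%N).2 _ hz dz.
  have [r ar] := hA0 a ha.
  rewrite ar (linZ lA) (d_1 hA) scaler0 in da.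
  exists (b0 + c0); split.
  - by apply: deg_D.
  - by rewrite (linD lB) db0 dc0 addr0.
  - have e : psi c0 = f (x t) - psi b0.
      by move/eqP: da; rewrite eq_sym subr_eq0 => /eqP.
    by rewrite (linD lpsi) e addrC subrK.
have hc1 : forall i, degB 1%N (c i) by move=> i; have [] := inv i.
have [gg gx] := PhiP fL gB hc1.
set g := Phi degL degB x c.
move: gg gx; rewrite -/g => gg gx.
have hgd : forall y, g (dL y) = dB (g y).
  move=> y; apply: (E_vanish cL hB gg _ (generation fL y)) => t _.
  rewrite gx; have [_ -> _] := inv t.
  have [gt pt] := PhiP fL gB (hrest t (fun mu _ => hc1 mu)).
  apply: (gagree gg gt _ (hdx t)) => nu hnu.
  by rewrite gx pt /restr; case: excluded_middle_informative.
have hgm : cdga_mor degL dL degB dB g by split.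
have hpg : forall y, psi (g y) = f y.
  move=> y; apply: (gagree (gmor_comp gg gpsi) gf _ (generation fL y)) => t _.
  by rewrite gx; have [_ _ ->] := inv t.
exists g; split => // hqf.
exact: (qi_2of3 hB hA hgm hpsi hpg hqf).
Qed.
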